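(* For $n\in \mathbb N_{0}$, \begin{align*} H_{n+1}^{(2)}&=\sum_{j=0}^{n}\binom{n+1}{j+1}\frac{(-1)^{j}}{(j+1)^2} -\sum_{k=0}^{n-1}\frac{1}{k+2}\sum_{j=0}^{k}\binom{k+1}{j+1}\frac{(-1)^{j}}{j+1}\,,\\ H_{n+1}^{(3)}&=\sum_{j=0}^{n}\binom{n+1}{j+1}\frac{(-1)^{j}}{(j+1)^3} -\sum_{j=0}^{n-1}\frac{1}{(j+2)^2}\sum_{\ell=0}^{j}\binom{j+1}{\ell+1}\frac{(-1)^{\ell}}{\ell+1} -\sum_{j=0}^{n-1}\frac{1}{j+2}\sum_{\ell=0}^{j}\binom{j+1}{\ell+1}\frac{(-1)^{\ell}}{(\ell+1)^2}\,. \end{align*}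
   Context: $H_n^{(q)}=\sum_{j=1}^n j^{-q}$ for $q\in\mathbb N$; empty sums are $0$. *)

(* Defs.v *)
From mathcomp Require Import all_boot all_order all_algebra.
Set Implicit Arguments. Unset Strict Implicit. Unset Printing Implicit Defensive.
Import Order.TTheory GRing.Theory Num.Theory.
Local Open Scope ring_scope.

Definition harm (q n : nat) : rat := \sum_(1 <= j < n.+1) ((j%:R) ^+ q)^-1.

(* Main.v *)
Require Import Defs.
From mathcomp Require Import all_boot all_order all_algebra.
Import Order.TTheory GRing.Theory Num.Theory.
Local Open Scope ring_scope.

From mathcomp Require Import ring lra.

Definition S (q m : nat) : rat :=
  \sum_(0 <= j < m) ('C(m, j.+1))%:R * (-1) ^+ j / ((j.+1)%:R ^+ q).

Lemma S0 m : S 0 m.+1 = 1.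
Proof.
rewrite /S.
under eq_bigr => j _ do rewrite expr0 divr1 binS natrD mulrDl.
rewrite big_split /=.
rewrite big_nat_recr //= bin_small // mul0r addr0.
rewrite big_nat_recl //= bin0 mul1r expr0.
under [X in _ + (1 + X)]eq_bigr => j _ do rewrite exprS mulN1r mulrN.
rewrite sumrN; ring.
Qed.

Lemma Sstep q m : S q.+1 m.+1 = S q.+1 m + S q m.+1 / m.+1%:R.
Proof.
rewrite /S.
under eq_bigr => j _ do rewrite binS natrD !mulrDl.
rewrite big_split /=.
rewrite [X in X + _ = _]big_nat_recr //= bin_small // !mul0r addr0.
congr (_ + _).
rewrite mulr_suml; apply: eq_bigr => j _.
have h : (m.+1 * 'C(m, j))%:R = (j.+1 * 'C(m.+1, j.+1))%:R :> rat
  by rewrite -mul_bin_diag.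
rewrite !natrM in h.
have hm : (m.+1)%:R != 0 :> rat by rewrite pnatr_eq0.
have hj : (j.+1)%:R != 0 :> rat by rewrite pnatr_eq0.
have h' : ('C(m, j))%:R = (j.+1)%:R * ('C(m.+1, j.+1))%:R / (m.+1)%:R :> rat.
  by rewrite -h mulrC mulrA mulVf // mul1r.
have e k : 1 + k%:R = k.+1%:R :> rat by rewrite addrC natr1.
rewrite h' exprS; field.
by rewrite !e hm hj expf_neq0.
Qed.

Lemma harmS q m : harm q m.+1 = harm q m + ((m.+1)%:R ^+ q)^-1.
Proof. by rewrite /harm big_nat_recr. Qed.

Lemma S1E m : S 1 m.+1 = S 1 m + ((m.+1)%:R)^-1.
Proof. by rewrite Sstep S0 div1r. Qed.

Lemma P1 n : harm 2 n.+1 = S 2 n.+1 - \sum_(0 <= k < n) ((k.+2)%:R)^-1 * S 1 k.+1.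
Proof.
elim: n => [|n IH].
  by rewrite /harm /S !big_nat1 big_geq // binn expr0 !mulr1 subr0.
rewrite harmS IH (Sstep 1 n.+1) (S1E n.+1) big_nat_recr //=.
have hn : (n.+2)%:R != 0 :> rat by rewrite pnatr_eq0.
field.
by rewrite -natrD pnatr_eq0.
Qed.

Lemma P2 n : harm 3 n.+1 = S 3 n.+1
    - \sum_(0 <= j < n) (((j.+2)%:R) ^+ 2)^-1 * S 1 j.+1
    - \sum_(0 <= j < n) ((j.+2)%:R)^-1 * S 2 j.+1.
Proof.
elim: n => [|n IH].
  by rewrite /harm /S !big_nat1 !big_geq // binn expr0 !mulr1 !subr0.
rewrite harmS IH (Sstep 2 n.+1) (Sstep 1 n.+1) (S1E n.+1) !big_nat_recr //=.
have hn : (n.+2)%:R != 0 :> rat by rewrite pnatr_eq0.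
field.
by rewrite -natrD pnatr_eq0.
Qed.

Theorem proposition3 (n : nat) :
  harm 2 n.+1 =
    \sum_(0 <= j < n.+1) ('C(n.+1, j.+1))%:R * (-1) ^+ j / ((j.+1)%:R ^+ 2)
    - \sum_(0 <= k < n) ((k.+2)%:R)^-1 *
        \sum_(0 <= j < k.+1) ('C(k.+1, j.+1))%:R * (-1) ^+ j / (j.+1)%:R
  /\
  harm 3 n.+1 =
    \sum_(0 <= j < n.+1) ('C(n.+1, j.+1))%:R * (-1) ^+ j / ((j.+1)%:R ^+ 3)
    - \sum_(0 <= j < n) (((j.+2)%:R) ^+ 2)^-1 *
        \sum_(0 <= l < j.+1) ('C(j.+1, l.+1))%:R * (-1) ^+ l / (l.+1)%:R
    - \sum_(0 <= j < n) ((j.+2)%:R)^-1 *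
        \sum_(0 <= l < j.+1) ('C(j.+1, l.+1))%:R * (-1) ^+ l / ((l.+1)%:R ^+ 2).
Proof.
split.
  rewrite P1 /S; congr (_ - _); apply: eq_bigr => k _; by rewrite /S; under eq_bigr => j _ do rewrite expr1.
rewrite P2 /S; congr (_ - _ - _); apply: eq_bigr => k _; by rewrite /S; under eq_bigr => j _ do rewrite expr1.
Qed.
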